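(* Let $n\geq 3$, $k\in\mathbb{Z}_n$ with $k\neq 0$ and $2k\not\equiv 0\pmod n$, and let $C$ be a total perfect code in $\mathrm{GP}(n,k)$. If $E(C)\cap E(U)\neq\emptyset$, then $E(C)\cap E(U,V)=\emptyset$.
   Context: For an integer $n\geq 3$ and a nonzero $k\in\mathbb{Z}_n$, the generalized Petersen graph $\mathrm{GP}(n,k)$ is the simple graph with vertex set $\{u_i,v_i\mid i\in\mathbb{Z}_n\}$ and edges $u_iu_{i+1}$, $u_iv_i$, $v_iv_{i+k}$ for all $i\in\mathbb{Z}_n$ (indices modulo $n$). Let $U=\{u_i\mid i\in\mathbb{Z}_n\}$ and $V=\{v_i\mid i\in\mathbb{Z}_n\}$. For vertex subsets $A,B$, $E(A,B)$ is the set of edges with one end in $A$ and the other in $B$, and $E(A)=E(A,A)$. A total perfect code in a graph $\Gamma$ is a set $C\subseteq V(\Gamma)$ such that every vertex of $\Gamma$ is adjacent to exactly one vertex of $C$. *)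

(* Defs.v *)
From mathcomp Require Import all_boot.
Set Implicit Arguments. Unset Strict Implicit. Unset Printing Implicit Defensive.

(* Vertices of GP(n,k): (false, i) = u_i (outer vertex), (true, i) = v_i (inner vertex),
   with i : 'I_n; indices are taken modulo n. *)
Definition gp_vertex (n : nat) := (bool * 'I_n)%type.

Definition addmod (n : nat) (i : 'I_n) (m : nat) : nat := (i + m) %% n.

(* adjacency of GP(n,k); k is given by a natural number (its residue mod n) *)
Definition gp_adj (n k : nat) (x y : gp_vertex n) : bool :=
  match x, y with
  | (false, i), (false, j) => (val j == addmod i 1) || (val i == addmod j 1)
  | (false, i), (true, j) => i == j
  | (true, i), (false, j) => i == j
  | (true, i), (true, j) => (val j == addmod i k) || (val i == addmod j k)
  end.

Definition total_perfect_code (n k : nat) (C : {set gp_vertex n}) : Prop :=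
  forall x : gp_vertex n, #|[set y in C | gp_adj k x y]| = 1.

Definition has_outer_edge_in (n : nat) (C : {set gp_vertex n}) : Prop :=
  exists i j : 'I_n, val j = addmod i 1 /\ (false, i) \in C /\ (false, j) \in C.

Definition no_spoke_in (n : nat) (C : {set gp_vertex n}) : Prop :=
  forall i : 'I_n, ~ ((false, i) \in C /\ (true, i) \in C).

(* Main.v *)
Require Import Defs.
From mathcomp Require Import all_boot all_order all_algebra.
From mathcomp Require Import zify ring.
Import Order.TTheory GRing.Theory Num.Theory.
Local Open Scope ring_scope.
Set Implicit Arguments. Unset Strict Implicit. Unset Printing Implicit Defensive.

Definition idx (n : nat) (Hn : (0 < n)%N) (z : int) : 'I_n :=
  Ordinal (ltn_pmod `|(z %% n%:Z)%Z| Hn).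

Lemma K1 n (Hn : (0 < n)%N) z : (val (idx Hn z))%:Z = (z %% n%:Z)%Z.
Proof.
rewrite /= -modz_nat.
have h0 : 0 <= (z %% n%:Z)%Z by apply: modz_ge0; rewrite eqz_nat; lia.
have h1 : (z %% n%:Z)%Z < n%:Z by apply: ltz_pmod; rewrite ltz_nat.
rewrite (gez0_abs h0) modz_small //; by rewrite h0 h1.
Qed.

Lemma K2 n (Hn : (0 < n)%N) (i : 'I_n) : idx Hn (val i) = i.
Proof. apply: val_inj; by rewrite /= modz_nat absz_nat modn_mod modn_small. Qed.

Lemma K3 n (Hn : (0 < n)%N) z w : (idx Hn z == idx Hn w) = ((z %% n%:Z)%Z == (w %% n%:Z)%Z).
Proof. by rewrite -!K1 eqz_nat. Qed.

Lemma K4 n (Hn : (0 < n)%N) z (m : nat) :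
  (addmod (idx Hn z) m)%:Z = ((z + m%:Z) %% n%:Z)%Z.
Proof. by rewrite /addmod -modz_nat PoszD K1 modzDml. Qed.

Lemma K5 n (i j : 'I_n) (m : nat) (Hn : (0 < n)%N) :
  (val j == addmod i m) = (((val j)%:Z %% n%:Z)%Z == (((val i)%:Z + m%:Z) %% n%:Z)%Z).
Proof.
have hj : (val j)%:Z = ((val j)%:Z %% n%:Z)%Z by rewrite modz_nat modn_small ?ltn_ord.
by rewrite -eqz_nat -hj -K4 K2.
Qed.

Lemma Lsym (N z w m : int) : ((z %% N)%Z == ((w + m) %% N)%Z) = ((w %% N)%Z == ((z - m) %% N)%Z).
Proof.
rewrite !eqz_mod_dvd !dvdzE; have -> : w - (z - m) = - (z - (w + m)) by ring.
by rewrite abszN.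
Qed.

Lemma card3 (T : finType) (C : {set T}) (P : pred T) (a b c : T) :
  uniq [:: a; b; c] -> (forall y, P y = (y \in [:: a; b; c])) ->
  #|[set y in C | P y]| = ((a \in C) + ((b \in C) + ((c \in C) + 0)))%N.
Proof.
move=> Hu HP.
have -> : #|[set y in C | P y]| = #|[seq y <- [:: a; b; c] | y \in C]|.
  by apply: eq_card => y; rewrite inE mem_filter HP.
have := filter_uniq (fun y => y \in C) Hu.
move=> /card_uniqP H.
by rewrite H size_filter /=.
Qed.

Lemma idx_neq n (Hn : (0 < n)%N) z w (m : nat) : (n %| m)%N = false ->
  w - z = m%:Z \/ z - w = m%:Z ->
  (idx Hn z == idx Hn w) = false.
Proof.
move=> hm hd; rewrite K3 eqz_mod_dvd dvdzE.
case: hd => hd.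
  have -> : z - w = - (w - z) by ring.
  by rewrite abszN hd absz_nat.
by rewrite hd absz_nat.
Qed.

Lemma LsymA n (Hn : (0 < n)%N) z w m :
  (idx Hn z == idx Hn (w - m)) = (idx Hn w == idx Hn (z + m)).
Proof.
rewrite !K3 !eqz_mod_dvd !dvdzE; have -> : z - (w - m) = - (w - (z + m)) by ring.
by rewrite abszN.
Qed.

Lemma LsymB n (Hn : (0 < n)%N) z w m :
  (idx Hn z == idx Hn (w + m)) = (idx Hn w == idx Hn (z - m)).
Proof. by rewrite -LsymA. Qed.

Definition X n (Hn : (0 < n)%N) (C : {set gp_vertex n}) (b : bool) (z : int) : nat :=
  ((b, idx Hn z) \in C : nat).

Lemma idx_mod n (Hn : (0 < n)%N) z : idx Hn ((z %% n%:Z)%Z) = idx Hn z.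
Proof. by apply/eqP; rewrite K3 modz_mod. Qed.

Lemma nbrU n k (Hn : (2 < n)%N) (C : {set gp_vertex n}) :
  total_perfect_code k C -> forall z : int,
  let Hn0 := ltnW (ltnW Hn) in
  (X Hn0 C false (z - 1) + X Hn0 C false (z + 1) + X Hn0 C true z = 1)%N.
Proof.
move=> tpc z Hn0.
have := tpc (false, idx Hn0 z).
rewrite (@card3 _ C _ (false, idx Hn0 (z - 1)) (false, idx Hn0 (z+1)) (true, idx Hn0 z)).
- by rewrite /X addn0 addnA.
- rewrite /= !in_cons in_nil !xpair_eqE /= ?orbF ?andbT.
  rewrite (@idx_neq _ _ _ _ 2) //.
    by apply/negP => /dvdn_leq; lia.
  by left; ring.
move=> [[|] j]; rewrite -(K2 Hn0 j); move: (Posz (val j)) => w.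
  by rewrite /= !inE !xpair_eqE /= eq_sym.
change ((val (idx Hn0 w) == addmod (idx Hn0 z) 1) || (val (idx Hn0 z) == addmod (idx Hn0 w) 1) = ((false, idx Hn0 w) \in [:: (false, idx Hn0 (z - 1)); (false, idx Hn0 (z + 1)); (true, idx Hn0 z)])).
rewrite !(K5 _ _ _ Hn0) !K1 !modz_mod !modzDml Lsym -!K3.
rewrite !in_cons in_nil !xpair_eqE /= ?orbF.
by rewrite (LsymA _ z w) (LsymB _ z w) orbC.
Qed.

Lemma nbrV n (k : nat) (Hn : (2 < n)%N) (C : {set gp_vertex n}) :
  ((2 * k) %% n != 0)%N ->
  total_perfect_code k C -> forall z : int,
  let Hn0 := ltnW (ltnW Hn) in
  (X Hn0 C true (z - k%:Z) + X Hn0 C true (z + k%:Z) + X Hn0 C false z = 1)%N.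
Proof.
move=> h2k tpc z Hn0.
have := tpc (true, idx Hn0 z).
rewrite (@card3 _ C _ (true, idx Hn0 (z - k%:Z)) (true, idx Hn0 (z+k%:Z)) (false, idx Hn0 z)).
- by rewrite /X addn0 addnA.
- rewrite /= !in_cons in_nil !xpair_eqE /= ?orbF ?andbT.
  rewrite (@idx_neq _ _ _ _ (2 * k)) //.
    by apply/negbTE; rewrite /dvdn.
  left; rewrite PoszM; ring.
move=> [[|] j]; rewrite -(K2 Hn0 j); move: (Posz (val j)) => w; last first.
  by rewrite /= !inE !xpair_eqE /= eq_sym.
change ((val (idx Hn0 w) == addmod (idx Hn0 z) k) || (val (idx Hn0 z) == addmod (idx Hn0 w) k) = ((true, idx Hn0 w) \in [:: (true, idx Hn0 (z - k%:Z)); (true, idx Hn0 (z + k%:Z)); (false, idx Hn0 z)])).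
rewrite !(K5 _ _ _ Hn0) !K1 !modz_mod !modzDml -!K3.
rewrite !in_cons in_nil !xpair_eqE /= ?orbF.
by rewrite (LsymB _ z w) orbC.
Qed.

Definition xc n (Hn : (0 < n)%N) C (K z0 a b : int) := X Hn C false (z0 + a + b * K).
Definition yc n (Hn : (0 < n)%N) C (K z0 a b : int) := X Hn C true (z0 + a + b * K).

Lemma local_step n (k : nat) (Hn : (2 < n)%N) (C : {set gp_vertex n}) :
  ((2 * k) %% n != 0)%N ->
  total_perfect_code k C -> forall z0 : int,
  let Hn0 := ltnW (ltnW Hn) in
  xc Hn0 C k%:Z z0 0 0 = 1%N -> yc Hn0 C k%:Z z0 0 0 = 1%N ->
  [/\ xc Hn0 C k%:Z z0 1 0 = 0%N, xc Hn0 C k%:Z z0 2 0 = 0%N,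
      xc Hn0 C k%:Z z0 3 0 = 1%N & yc Hn0 C k%:Z z0 3 0 = 1%N].
Proof.
move=> h2k tpc z0 Hn0.
have cU : forall a b a1 a2 : int, a1 = a - 1 -> a2 = a + 1 ->
    (xc Hn0 C k%:Z z0 a1 b + xc Hn0 C k%:Z z0 a2 b + yc Hn0 C k%:Z z0 a b = 1)%N.
  move=> a b a1 a2 -> ->; rewrite /xc /yc.
  have -> : z0 + (a - 1) + b * k%:Z = (z0 + a + b * k%:Z) - 1 by ring.
  have -> : z0 + (a + 1) + b * k%:Z = (z0 + a + b * k%:Z) + 1 by ring.
  exact: nbrU.
have cV : forall a b b1 b2 : int, b1 = b - 1 -> b2 = b + 1 ->
    (yc Hn0 C k%:Z z0 a b1 + yc Hn0 C k%:Z z0 a b2 + xc Hn0 C k%:Z z0 a b = 1)%N.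
  move=> a b b1 b2 -> ->; rewrite /xc /yc.
  have -> : z0 + a + (b - 1) * k%:Z = (z0 + a + b * k%:Z) - k%:Z by ring.
  have -> : z0 + a + (b + 1) * k%:Z = (z0 + a + b * k%:Z) + k%:Z by ring.
  exact: nbrV.
move=> H1 H2.
have := cU 0 0 (-1) 1 erefl erefl.
have := cU 1 (-1) 0 2 erefl erefl.
have := cU 1 0 0 2 erefl erefl.
have := cU 1 1 0 2 erefl erefl.
have := cU 2 (-3) 1 3 erefl erefl.
have := cU 2 (-1) 1 3 erefl erefl.
have := cU 2 0 1 3 erefl erefl.
have := cU 2 1 1 3 erefl erefl.
have := cU 2 3 1 3 erefl erefl.
have := cU 3 (-1) 2 4 erefl erefl.
have := cU 3 1 2 4 erefl erefl.
have := cV 0 (-1) (-2) 0 erefl erefl.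
have := cV 0 1 0 2 erefl erefl.
have := cV 1 (-3) (-4) (-2) erefl erefl.
have := cV 1 (-1) (-2) 0 erefl erefl.
have := cV 1 0 (-1) 1 erefl erefl.
have := cV 1 1 0 2 erefl erefl.
have := cV 1 3 2 4 erefl erefl.
have := cV 2 (-2) (-3) (-1) erefl erefl.
have := cV 2 (-1) (-2) 0 erefl erefl.
have := cV 2 0 (-1) 1 erefl erefl.
have := cV 2 1 0 2 erefl erefl.
have := cV 2 2 1 3 erefl erefl.
have := cV 3 (-3) (-4) (-2) erefl erefl.
have := cV 3 (-1) (-2) 0 erefl erefl.
have := cV 3 0 (-1) 1 erefl erefl.
have := cV 3 1 0 2 erefl erefl.
have := cV 3 3 2 4 erefl erefl.
clear cU cV. split; lia.
Qed.

Lemma Xmod n (Hn : (0 < n)%N) C b z w : (z %% n%:Z)%Z = (w %% n%:Z)%Z -> X Hn C b z = X Hn C b w.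
Proof. by move=> h; rewrite /X; congr (nat_of_bool ((b, _) \in C)); apply/eqP; rewrite K3 h. Qed.

Lemma XK n (Hn : (0 < n)%N) C b (i : 'I_n) : X Hn C b (val i) = ((b, i) \in C : nat).
Proof. by rewrite /X K2. Qed.

Lemma main_aux (n k : nat) (C : {set gp_vertex n}) :
  (3 <= n)%N -> (k %% n != 0)%N -> ((2 * k) %% n != 0)%N ->
  total_perfect_code k C ->
  has_outer_edge_in C ->
  no_spoke_in C.
Proof.
move=> Hn hk h2k tpc [i [i' [hi' [Ci Ci']]]] j [Cj1 Cj2].
set Hn0 := ltnW (ltnW Hn).
have step : forall z, X Hn0 C false z = 1%N -> X Hn0 C true z = 1%N ->
   [/\ X Hn0 C false (z + 1) = 0%N, X Hn0 C false (z + 2) = 0%N,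
       X Hn0 C false (z + 3) = 1%N & X Hn0 C true (z + 3) = 1%N].
  move=> z h1 h2.
  have := @local_step n k Hn C h2k tpc z.
  rewrite /xc /yc !mul0r !addr0; exact.
set z0 : int := Posz (val j).
have ind : forall m : nat, X Hn0 C false (z0 + (m * 3)%:Z) = 1%N /\ X Hn0 C true (z0 + (m * 3)%:Z) = 1%N.
  elim=> [|m [h1 h2]].
    by rewrite mul0n addr0 !XK Cj1 Cj2.
  have [_ _ h3 h4] := step _ h1 h2.
  have -> : z0 + (m.+1 * 3)%:Z = z0 + (m * 3)%:Z + 3.
    by rewrite mulSn PoszD addrA addrC addrA; congr (_ + _); rewrite addrC.
  by split.
have key : forall t : nat, X Hn0 C false (z0 + t%:Z) = (t %% 3 == 0)%N.
  move=> t; rewrite {1}(divn_eq t 3); set q := (t %/ 3)%N.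
  have [h1 h2] := ind q; have [a b c d] := step _ h1 h2.
  have := ltn_pmod t (isT : (0 < 3)%N); case: (t %% 3)%N => [|[|[|s]]] // _.
  - by rewrite addn0.
  - by rewrite PoszD addrA.
  - by rewrite PoszD addrA.
pose r := `|(((val i)%:Z - z0) %% n%:Z)%Z|%N.
have hr : ((z0 + r%:Z) %% n%:Z)%Z = ((val i)%:Z %% n%:Z)%Z.
  rewrite /r gez0_abs; last by apply: modz_ge0; rewrite eqz_nat; lia.
  by rewrite modzDmr addrC subrK.
clearbody r.
have X1 : X Hn0 C false (z0 + r%:Z) = 1%N by rewrite (Xmod _ _ _ hr) XK Ci.
have hi'2 : ((val i')%:Z %% n%:Z)%Z = (((val i)%:Z + 1) %% n%:Z)%Z.
  have := K4 Hn0 (val i) 1; rewrite K2 -hi' => ->; by rewrite modz_mod.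
have hr2 : ((z0 + (r.+1)%:Z) %% n%:Z)%Z = ((val i')%:Z %% n%:Z)%Z.
  by rewrite hi'2 -addn1 PoszD addrA -(modzDml (z0 + r%:Z)) hr modzDml.
have X2 : X Hn0 C false (z0 + (r.+1)%:Z) = 1%N by rewrite (Xmod _ _ _ hr2) XK Ci'.
move: X1 X2; rewrite !key.
case: eqP => e1; case: eqP => e2 // _ _.
lia.
Qed.

Local Close Scope ring_scope.

Theorem lemma4p3 (n k : nat) (C : {set gp_vertex n}) :
  3 <= n -> k %% n != 0 -> (2 * k) %% n != 0 ->
  total_perfect_code k C ->
  has_outer_edge_in C ->
  no_spoke_in C.
Proof. exact: main_aux. Qed.
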